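(* Let $q$ be an odd prime power and $n=\frac{q^3+1}{2}$. For an integer $\delta$ with $1\le\delta-1\le\frac{q^2-1}{2}$ put $\epsilon=\lceil(\delta-1)(1-q^{-1})\rceil$. Then $\mathcal{C}_{(n,q,\delta,1)}$ has parameters $[n,k,d\ge\delta]$ and $\mathcal{C}_{(n,q,\delta+1,0)}$ has parameters $[n,k-1,d\ge2\delta]$, where $k=n-6\epsilon$ if $2\le\delta\le\frac{q^2-1}{2}-\frac{q-3}{2}$, and $k=n-6\epsilon+6\big(\delta-\frac{q^2-1}{2}+\lfloor\frac{q-2}{2}\rfloor\big)$ if $\frac{q^2-1}{2}-\frac{q-3}{2}<\delta\le\frac{q^2-1}{2}+1$.
   Context: Let $q$ be a prime power and $n\ge2$ an integer with $\gcd(n,q)=1$. Let $\ell=\mathrm{ord}_n(q)$, let $\alpha$ be a generator of $\mathbb{F}_{q^\ell}^*$, $\beta=\alpha^{(q^\ell-1)/n}$, and let $m_i(x)$ be the minimal polynomial of $\beta^i$ over $\mathbb{F}_q$. For integers $b\ge0$ and $2\le\delta\le n$, $\mathcal{C}_{(n,q,\delta,b)}$ denotes the cyclic (BCH) code of length $n$ over $\mathbb{F}_q$ with generator polynomial $\mathrm{lcm}(m_b(x),\dots,m_{b+\delta-2}(x))$. $[n,k,d\ge D]$ means length $n$, dimension $k$, minimum Hamming distance at least $D$. *)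

(* Defs.v *)
From HB Require Import structures.
From mathcomp Require Import all_boot all_order all_algebra all_field.
Set Implicit Arguments. Unset Strict Implicit. Unset Printing Implicit Defensive.
Import GRing.Theory.
Local Open Scope ring_scope.

(* least common multiple of polynomials over a field (defined up to a unit) *)
Definition lcmp (R : fieldType) (p q : {poly R}) : {poly R} := (p * q) %/ gcdp p q.

Section BCH.
Variables (F : finFieldType) (L : fieldExtType F) (n : nat) (beta : L).

(* m_i(x): minimal polynomial of beta^i over F (seen in {poly L}) *)
Definition minpol (i : nat) : {poly L} := minPoly 1%VS (beta ^+ i).

Definition bch_gen (delta b : nat) : {poly L} :=
  \big[@lcmp L/1]_(b <= i < b + delta - 1) minpol i.

Definition word_poly (c : 'rV[F]_n) : {poly L} :=
  map_poly (in_alg L) (\sum_(i < n) c ord0 i *: 'X^i).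

Definition bch_code (delta b : nat) : {set 'rV[F]_n} :=
  [set c : 'rV[F]_n | bch_gen delta b %| word_poly c].
End BCH.

Definition wt (F : finFieldType) (n : nat) (c : 'rV[F]_n) : nat :=
  #|[set i : 'I_n | c ord0 i != 0]|.

Definition min_dist_ge (F : finFieldType) (n : nat) (C : {set 'rV[F]_n}) (D : nat) :=
  forall c, c \in C -> c != 0 -> (D <= wt c)%N.

(* ceil((delta-1)(1 - 1/q)) = ceil((delta-1)(q-1)/q) *)
Definition eps (q delta : nat) : nat := ((delta - 1) * (q - 1) + q - 1) %/ q.

Definition kdim (q delta : nat) : int :=
  let n := ((q ^ 3 + 1) %/ 2)%N in
  let h := ((q ^ 2 - 1) %/ 2)%N in
  if (delta <= h - (q - 3) %/ 2)%N then (n%:Z - 6 * (eps q delta)%:Z)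
  else (n%:Z - 6 * (eps q delta)%:Z + 6 * (delta%:Z - h%:Z + ((q - 2) %/ 2)%:Z)).

(* Main.v *)
Require Import Defs.
From HB Require Import structures.
From mathcomp Require Import all_boot all_order all_algebra all_field.
From mathcomp Require Import zify.
Import GRing.Theory.
Local Open Scope ring_scope.

Set Implicit Arguments. Unset Strict Implicit. Unset Printing Implicit Defensive.

Section NatPart.
Local Open Scope nat_scope.

Lemma modn_eqv x t v n : v < n -> x = t * n + v -> x %% n = v.
Proof. by move=> vn ->; rewrite modnMDl modn_small. Qed.

Section NT.
Variables (u q n : nat).
Hypothesis u1 : 1 <= u.
Hypothesis hq : q = u.*2.+1.
Hypothesis hn : n = 4 * u * u * u + 6 * u * u + 3 * u + 1.

Let M := 2 * u * u + u.

Lemma q3n : q ^ 3 + 1 = 2 * n.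
Proof. rewrite hq hn; nia. Qed.

Lemma mulq3 y : 1 <= y < n -> (y * q ^ 3) %% n = n - y.
Proof.
move=> /andP [y1 yn]; apply: (@modn_eqv _ (2 * y - 1)); first lia.
have := q3n; move: (q ^ 3) => Q; nia.
Qed.


Lemma n_gt1 : 1 < n. Proof. rewrite hn; nia. Qed.

Lemma mulq3_mod x : 0 < x %% n -> (x * q ^ 3) %% n = n - x %% n.
Proof.
move=> x0; rewrite -modnMml mulq3 //; rewrite x0 /= ltn_pmod //; lia.
Qed.

Lemma q6 : q ^ 6 %% n = 1.
Proof.
have n1 := n_gt1.
have e3 : q ^ 3 %% n = n - 1 by rewrite -(mul1n (q ^ 3)) mulq3 //; lia.
rewrite (_ : 6 = 3 + 3) // expnD mulq3_mod e3; lia.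
Qed.

Definition inT i := (0 < i <= M) && ~~ (q %| i).

Lemma iq_small i : inT i -> 0 < i * q < n.
Proof.
case/andP => /andP [i0 iM] ndv.
have iM' : i < M.
  rewrite ltn_neqAle iM andbT; apply: contraNneq ndv => ->.
  by rewrite /M hq; apply/dvdnP; exists u; lia.
rewrite /M in iM'; rewrite hn hq; nia.
Qed.

Lemma v2_bounds i : inT i -> M < (i * q ^ 2) %% n < n - M.
Proof.
move=> Ti; have := iq_small Ti; case/andP: Ti => /andP [i0 iM] ndv iq.
have q0 : 0 < q by rewrite hq.
have ei := divn_eq i q; set a := i %% q in ei *; set b := i %/ q in ei *.
have a0 : 0 < a by rewrite lt0n /a -/(dvdn q i).
have aq : a < q by rewrite /a ltn_pmod.
have bu : b < u.
  rewrite /M in iM; rewrite ltnNge; apply/negP => ub.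
  have : u * q <= b * q by rewrite leq_mul2r ub orbT.
  rewrite hq in ei aq *; lia.
clearbody a b.
have e2 : i * q ^ 2 = b * (q * q * q) + a * (q * q).
  by rewrite ei expnS expn1 mulnDl; congr (_ + _); rewrite !mulnA.
have Q3 : q * q * q = q ^ 3 by rewrite !expnS expn0 muln1 mulnA.
have e4 : b * (q * q * q) + b = 2 * (b * n).
  by rewrite Q3 -{2}(muln1 b) -mulnDr q3n mulnCA.
have qq : q * q = 4 * u * u + 4 * u + 1 by rewrite hq; lia.
have Qq : q <= q * q by rewrite leq_pmulr.
rewrite e2; move: e4 e2 Qq qq; set Q := q * q => e4 e2 Qq qq.
have uQ : u * Q = 4 * u * u * u + 4 * u * u + u by rewrite qq; lia.
have aQ1 : Q <= a * Q by rewrite leq_pmull.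
have aQ2 : a * Q <= u.*2 * Q by rewrite leq_mul2r; rewrite hq in aq; rewrite ltnS in aq; rewrite aq orbT.
have uQ2 : u.*2 * Q = 2 * (u * Q) by rewrite -mul2n mulnA.
clearbody Q.
case: (leqP a u) => au.
  have aQ3 : a * Q <= u * Q by rewrite leq_mul2r au orbT.
  rewrite (@modn_eqv _ (2 * b) (a * Q - b)).
  - rewrite /M; rewrite hq hn in ei aq bu *; lia.
  - rewrite hq hn in aq *; lia.
  - rewrite hq hn in aq *; lia.
have aQ3 : (u.+1) * Q <= a * Q by rewrite leq_mul2r au orbT.
rewrite (@modn_eqv _ (2 * b + 1) (a * Q - b - n)).
- rewrite /M; rewrite hq hn in aq *; lia.
- rewrite hq hn in aq *; lia.
- rewrite hq hn in aq *; lia.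
Qed.


Lemma Q3e : q * q * q = q ^ 3.
Proof. by rewrite !expnS expn0 muln1 mulnA. Qed.

Lemma notT_orbit i k : inT i -> 0 < k < 6 -> ~~ inT ((i * q ^ k) %% n).
Proof.
move=> Ti kk; have := iq_small Ti; have := v2_bounds Ti.
case/andP: (Ti) => /andP [i0 iM] ndv /andP [v2M v2n] /andP [iq0 iqn].
have n1 := n_gt1.
have Mn : M + M < n by rewrite /M hn; lia.
have iM' : i < M.
  rewrite ltn_neqAle iM andbT; apply: contraNneq ndv => ->.
  by rewrite /M hq; apply/dvdnP; exists u; lia.
have iqM : i * q + M < n.
  have : i.+1 * q <= M * q by rewrite leq_mul2r iM' orbT.
  have : M * q = 4 * u * u * u + 4 * u * u + u by rewrite /M hq; lia.
  rewrite /M hn hq; lia.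
rewrite /inT; apply/negP => /andP [/andP [v0 vM] vq].
case: k kk vM vq v0 => [|[|[|[|[|[|k]]]]]] //= _.
- by rewrite expn1 modn_small // dvdn_mull.
- by move=> H; move: v2M; rewrite ltnNge H.
- by rewrite mulq3 ?i0 ?(leq_ltn_trans iM) //; lia.
- rewrite (_ : 4 = 1 + 3) // expnD mulnA mulq3 ?expn1 ?iq0 //; lia.
- rewrite (_ : 5 = 2 + 3) // expnD mulnA mulq3_mod; first lia.
  by apply: leq_ltn_trans v2M.
Qed.

Lemma q6_mul j : (j * q ^ 6) %% n = j %% n.
Proof. by rewrite -modnMmr q6 muln1. Qed.

Lemma reach i : 0 < i <= 2 * u * u + 2 * u ->
  exists j k, [/\ inT j, j <= i, k < 6 & (j * q ^ k) %% n = i].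
Proof.
have n1 := n_gt1.
elim: i {-2}i (leqnn i) => [|m IH] i im /andP [i0 ih]; first by move: im i0; case: (i).
have inn : i < n by rewrite hn; lia.
case Ti : (inT i).
  by exists i, 0; split => //; rewrite expn0 muln1 modn_small.
case/boolP: (q %| i) => qi.
  case/dvdnP: qi => i' ei.
  have q1 : 1 < q by rewrite hq; lia.
  have i'0 : 0 < i' by move: i0; rewrite ei; case: (i').
  have i'i : i' < i by rewrite ei; rewrite -[X in X < _]muln1 ltn_mul2l i'0.
  have H1 : i' <= m by lia.
  have H2 : 0 < i' <= 2 * u * u + 2 * u by rewrite i'0 /=; lia.
  have [j [k [Tj ji k6 ejk]]] := IH i' H1 H2.
  have ejk1 : (j * q ^ k.+1) %% n = i.
    by rewrite expnSr mulnA -modnMml ejk -ei modn_small.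
  case: (ltnP k.+1 6) => k6'.
    by exists j, k.+1; split => //; lia.
  exists j, 0; split => //; first lia.
  have k5 : k.+1 = 6 by lia.
  by rewrite expn0 muln1 -q6_mul -k5.
have iM : M < i.
  move: Ti; rewrite /inT i0 qi /= andbT => /negbT; rewrite -ltnNge.
  done.
set a := i - M.
have a1 : 0 < a by rewrite /a; lia.
have au : a <= u by rewrite /a /M; lia.
set c := u - a.
have qq : q * q = 4 * u * u + 4 * u + 1 by rewrite hq; lia.
have e4 : c * (q * q * q) + c = 2 * (c * n).
  by rewrite Q3e -{2}(muln1 c) -mulnDr q3n mulnCA.
have cq : c * q <= (u - 1) * q by rewrite leq_mul2r; apply/orP; right; rewrite /c; lia.
have uq : (u - 1) * q + u + 1 = 2 * u * u.
  have [w hw] : exists w, u = w.+1 by exists u.-1; lia.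
  by rewrite hq hw subn1 /=; lia.
exists (u.+1 + c * q), 2; split => //.
- rewrite /inT; apply/andP; split.
    by apply/andP; split; [lia | rewrite /M; lia].
  rewrite /dvdn addnC modnMDl modn_small ?hq //; lia.
- rewrite /M in iM; lia.
- apply: (@modn_eqv _ (2 * c + 1)) => //.
  have e2 : (u.+1 + c * q) * q ^ 2 = u.+1 * (q * q) + c * (q * q * q).
    by rewrite expnS expn1 mulnDl !mulnA.
  have uQ : u.+1 * (q * q) = u + n + M by rewrite qq /M hn; lia.
  rewrite e2 uQ; move: e4; move: (c * (q * q * q)) => X.
  rewrite /c /a; lia.
Qed.

End NT.


Definition cnt q x := x - x %/ q.

Lemma sumcnt q y x : 0 < q ->
  \sum_(0 <= i < x.+1) ((0 < i <= y) && ~~ (q %| i)) = cnt q (minn x y).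
Proof.
move=> q0; elim: x => [|x IH]; first by rewrite big_nat1 /cnt min0n div0n.
rewrite big_nat_recr //= IH /cnt.
case: (leqP x.+1 y) => xy.
  have -> : minn x y = x by lia.
  rewrite /= (divnS _ q0); case: (q %| x.+1) => /=.
    have : x %/ q <= x by apply: leq_div.
    lia.
  have : x %/ q <= x by apply: leq_div.
  lia.
have -> : minn x y = y by lia.
by rewrite /= addn0.
Qed.

Lemma eps_cnt q x : 0 < q -> ((x * (q - 1) + q - 1) %/ q) = cnt q x.
Proof.
move=> q0; rewrite /cnt {1 3}(divn_eq x q).
set a := x %/ q; set r := x %% q.
have rq : r < q by rewrite /r ltn_pmod.
have -> : (a * q + r) * (q - 1) + q - 1 = (a * (q - 1) + r) * q + (q - 1 - r).
  have [w hw] : exists w, q = w.+1 by exists q.-1; lia.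
  rewrite hw subn1 /= in rq *.
  have -> : w.+1 - 1 - r = w - r by lia.
  nia.
rewrite divnMDl // divn_small; last by lia.
have : a <= a * q by rewrite leq_pmulr.
rewrite addn0; nia.
Qed.

End NatPart.



Section Frob.
Variables (F : finFieldType) (L : fieldExtType F).

Definition frob (x : L) := x ^+ #|F|.

Lemma frob_pnat : [pchar L].-nat #|F|.
Proof.
have [p pr_p pcharFp] := finPcharP F.
have pcharLp : p \in [pchar L] by by rewrite (pchar_lalg L).
rewrite (eq_pnat _ (pcharf_eq pcharLp)).
rewrite (card_pprimeChar pcharFp).
by rewrite pnatX pnat_id ?orbT.
Qed.

Lemma frob_is_nmod_morphism : nmod_morphism frob.
Proof.
split=> [|x y]; rewrite /frob; first by rewrite expr0n; case: #|F| (finNzRing_gt1 F).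
exact: exprDn_pchar frob_pnat.
Qed.

Lemma frob_is_monoid_morphism : monoid_morphism frob.
Proof. by split=> [|x y]; rewrite /frob ?expr1n // exprMn. Qed.

HB.instance Definition _ := GRing.isNmodMorphism.Build L L frob frob_is_nmod_morphism.
HB.instance Definition _ := GRing.isMonoidMorphism.Build L L frob frob_is_monoid_morphism.

Lemma frob_alg (a : F) : frob (in_alg L a) = in_alg L a.
Proof. by rewrite /frob -rmorphXn expf_card. Qed.

End Frob.



Lemma lcmpP (R : fieldType) (p q r : {poly R}) : p != 0 -> q != 0 ->
  (lcmp p q != 0) /\ ((lcmp p q %| r) = (p %| r) && (q %| r)).
Proof.
move=> p0 q0; set g := gcdp p q.
have g0 : g != 0 by rewrite gcdp_eq0 negb_and p0.
have cop : coprimep (p %/ g) (q %/ g) by apply: coprimep_div_gcd; rewrite p0.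
have Hp : p = (p %/ g) * g by rewrite divpK // dvdp_gcdl.
have Hq : q = (q %/ g) * g by rewrite divpK // dvdp_gcdr.
have El : lcmp p q = (p %/ g) * q.
  by rewrite /lcmp -/g {1}Hp mulrAC mulpK.
move: El cop Hp Hq; set p' := p %/ g; set q' := q %/ g => El cop Hp Hq.
have pg0 : p' != 0 by apply: contraNneq p0 => e; rewrite Hp e mul0r.
split; first by rewrite El mulf_neq0.
apply/idP/andP.
  move=> H; split; apply: dvdp_trans H; rewrite El.
    by rewrite Hq mulrCA -Hp dvdp_mulIr.
  exact: dvdp_mulIr.
case=> Hpr /dvdpP [y Ey]; rewrite El Ey.
have : p' * g %| y * q' * g.
  by rewrite -Hp -mulrA -Hq -Ey.
rewrite dvdp_mul2r // Gauss_dvdpl //.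
by move/dvdpP=> [z ->]; rewrite -mulrA dvdp_mulIr.
Qed.

Section Gen.
Variables (F : finFieldType) (L : fieldExtType F) (n : nat) (beta : L).

Lemma big_lcm_dvd (s : seq nat) (R : {poly L}) :
  (\big[@lcmp L/1]_(i <- s) minpol beta i != 0) /\
  ((\big[@lcmp L/1]_(i <- s) minpol beta i %| R) = all (fun i => minpol beta i %| R) s).
Proof.
elim: s => [|i s [IH1 IH2]]; first by rewrite big_nil oner_neq0 dvd1p.
rewrite big_cons /=.
have m0 : minpol beta i != 0 by rewrite monic_neq0 // monic_minPoly.
by have [-> ->] := lcmpP R m0 IH1; rewrite IH2.
Qed.

Lemma minpol_dvd (r : {poly F}) i :
  (minpol beta i %| map_poly (in_alg L) r) = root (map_poly (in_alg L) r) (beta ^+ i).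
Proof.
apply/idP/idP => H.
  exact: root_dvdp H (root_minPoly _ _).
apply: minPoly_dvdp H; apply/polyOver1P; by exists r.
Qed.

Lemma bch_genP delta b (r : {poly F}) :
  (bch_gen beta delta b %| map_poly (in_alg L) r) <->
  (forall i, (b <= i < b + delta - 1)%N -> root (map_poly (in_alg L) r) (beta ^+ i)).
Proof.
rewrite /bch_gen; have [_ ->] := big_lcm_dvd (index_iota b (b + delta - 1)) (map_poly (in_alg L) r).
split.
  by move=> /allP H i Hi; rewrite -minpol_dvd; apply: H; rewrite mem_index_iota.
by move=> H; apply/allP => i; rewrite mem_index_iota minpol_dvd; apply: H.
Qed.
End Gen.



Section Count.
Variables (F : finFieldType) (L : fieldExtType F) (n : nat) (beta : L).
Hypothesis prim : n.-primitive_root beta.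

Local Notation q := #|F|.
Local Notation lift_poly := (map_poly (in_alg L)).

Lemma frob_root (r : {poly F}) x : root (lift_poly r) x -> root (lift_poly r) (x ^+ q).
Proof.
have E : map_poly (@frob F L) (lift_poly r) = lift_poly r.
  by rewrite -map_poly_comp; apply: eq_map_poly => a /=; rewrite frob_alg.
rewrite /root => /eqP H; apply/eqP.
have -> : x ^+ q = frob x by [].
by rewrite -{1}E horner_map H rmorph0.
Qed.

Lemma root_expq (r : {poly F}) i k : root (lift_poly r) (beta ^+ i) ->
  root (lift_poly r) (beta ^+ (i * q ^ k)).
Proof.
move=> H; elim: k => [|k IH]; first by rewrite expn0 muln1.
by rewrite expnS mulnCA mulnC exprM; apply: frob_root.
Qed.

Lemma prim_inj (i j : 'I_n) : beta ^+ i = beta ^+ j -> i = j.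
Proof.
move/eqP; rewrite (eq_prim_root_expr prim) !modn_small //.
by move/eqP/val_inj.
Qed.

Lemma in1_of_frob (x : L) : x ^+ q = x -> x \in 1%VS.
Proof.
move=> H.
have : root (lift_poly ('X^q - 'X)) x.
  by rewrite rmorphB /= map_polyXn map_polyX rootE !hornerE H subrr.
rewrite finField_genPoly rmorph_prod /=.
rewrite (eq_bigr (fun a => 'X - (in_alg L a)%:P)); last by move=> a _; rewrite map_polyXsubC.
rewrite -big_enum -(big_map (in_alg L) xpredT (fun z => 'X - z%:P)) root_prod_XsubC.
case/mapP => a _ ->; by rewrite rpredZ // mem1v.
Qed.


Let n_gt0 : (0 < n)%N. Proof. exact: prim_order_gt0 prim. Qed.

Definition sigq (j : 'I_n) : 'I_n := Ordinal (ltn_pmod (j * q) n_gt0).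

Lemma beta_sigq (j : 'I_n) : beta ^+ sigq j = frob (beta ^+ j).
Proof. by rewrite /frob /= (prim_expr_mod prim) exprM. Qed.

Lemma sigq_inj : injective sigq.
Proof.
move=> i j /(congr1 (fun k : 'I_n => beta ^+ k)); rewrite !beta_sigq.
by move/fmorph_inj/prim_inj.
Qed.

Variable S : {set 'I_n}.
Hypothesis Sclosed : forall j : 'I_n, j \in S -> sigq j \in S.

Definition Gp : {poly L} := \prod_(j in S) ('X - (beta ^+ j)%:P).

Lemma sigqS (j : 'I_n) : (sigq j \in S) = (j \in S).
Proof.
have sub : sigq @: S \subset S by apply/subsetP => x /imsetP [y yS ->]; apply: Sclosed.
have /subset_cardP E : #|sigq @: S| = #|S| by rewrite card_imset //; apply: sigq_inj.
by rewrite -(E sub) mem_imset //; apply: sigq_inj.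
Qed.

Lemma Gp_frob : map_poly (@frob F L) Gp = Gp.
Proof.
rewrite /Gp rmorph_prod /=.
rewrite (eq_bigr (fun j => 'X - (beta ^+ sigq j)%:P)); last first.
  by move=> j _; rewrite map_polyXsubC beta_sigq.
rewrite [RHS](reindex_inj sigq_inj) /=.
by apply: eq_bigl => j; rewrite sigqS.
Qed.

Lemma Gp_over : Gp \is a polyOver 1%VS.
Proof.
apply/polyOverP => k; apply: in1_of_frob.
have -> : Gp`_k ^+ q = frob (Gp`_k) by [].
by rewrite -coef_map Gp_frob.
Qed.

Definition rts := [seq beta ^+ (j : nat) | j : 'I_n <- enum S].

Lemma Gp_rts : Gp = \prod_(z <- rts) ('X - z%:P).
Proof. by rewrite /Gp big_map big_enum. Qed.

Lemma size_Gp : size Gp = (#|S|).+1.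
Proof. by rewrite Gp_rts size_prod_XsubC size_map cardE. Qed.

Lemma Gp_dvd (r : {poly F}) :
  (Gp %| lift_poly r) = [forall j in S, root (lift_poly r) (beta ^+ j)].
Proof.
apply/idP/forall_inP => [H j jS | H].
  apply: root_dvdp H _; rewrite Gp_rts root_prod_XsubC.
  by apply: map_f; rewrite mem_enum.
rewrite Gp_rts; apply: uniq_roots_dvdp.
  by apply/allP => z /mapP [j]; rewrite mem_enum => jS ->; apply: H.
rewrite uniq_rootsE (map_inj_uniq (f := fun j : 'I_n => beta ^+ j)) ?enum_uniq //.
by move=> i j; apply: prim_inj.
Qed.

End Count.



Section Card.
Variables (F : finFieldType).
Local Notation q := #|F|.

Definition pc n (c : 'rV[F]_n) : {poly F} := \sum_(i < n) c ord0 i *: 'X^i.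
Definition rowp n (p : {poly F}) : 'rV[F]_n := \row_(i < n) p`_i.

Lemma coef_pc_sum n (c : 'rV[F]_n) k : (pc c)`_k = \sum_(i < n) c ord0 i * (k == i)%:R.
Proof. by rewrite /pc coef_sum; apply: eq_bigr => i _; rewrite coefZ coefXn. Qed.

Lemma coef_pc n (c : 'rV[F]_n) (k : 'I_n) : (pc c)`_k = c ord0 k.
Proof.
rewrite coef_pc_sum (bigD1 k) //= eqxx mulr1 big1 ?addr0 // => i ik.
have -> : (k == i :> nat) = false by rewrite eq_sym; apply/negbTE.
by rewrite mulr0.
Qed.

Lemma size_pc n (c : 'rV[F]_n) : (size (pc c) <= n)%N.
Proof.
apply/leq_sizeP => j jn; rewrite coef_pc_sum big1 // => i _.
have : (j != i) by apply/eqP => e; move: (ltn_ord i); rewrite -e; lia.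
by move/negbTE->; rewrite mulr0.
Qed.

Lemma pc_rowp n (p : {poly F}) : (size p <= n)%N -> pc (rowp n p) = p.
Proof.
move=> sp; apply/polyP => k; case: (ltnP k n) => kn.
  by rewrite (coef_pc _ (Ordinal kn)) mxE.
rewrite nth_default; last by apply: leq_trans (size_pc _) kn.
by rewrite nth_default //; apply: leq_trans sp kn.
Qed.

Lemma rowp_pc n (c : 'rV[F]_n) : rowp n (pc c) = c.
Proof.
apply/matrixP => i j; have -> : i = ord0 by apply/val_inj; case: i => [[]].
by rewrite mxE coef_pc.
Qed.

Lemma card_dvd n (GF : {poly F}) : GF != 0 -> (size GF <= n.+1)%N ->
  #|[set c : 'rV[F]_n | GF %| pc c]| = (q ^ (n - (size GF).-1))%N.
Proof.
move=> G0 sG; set m := (n - (size GF).-1)%N.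
have sG1 : (0 < size GF)%N by rewrite size_poly_gt0.
pose psi (h : 'rV[F]_m) : 'rV[F]_n := rowp n (GF * pc h).
have sz : forall h : 'rV[F]_m, (size (GF * pc h)%R <= n)%N.
  move=> h; have [->|h0] := eqVneq (pc h) 0; first by rewrite mulr0 size_poly0.
  rewrite size_mul //; have := size_pc h; move: (size (pc h)) => s; rewrite /m; move: sG sG1; move: (size GF) => g; rewrite -!subn1; lia.
have Epsi : forall h, pc (psi h) = GF * pc h by move=> h; rewrite pc_rowp.
have inj : injective psi.
  move=> h1 h2 /(congr1 (@pc n)); rewrite !Epsi => /(mulfI G0) E.
  by rewrite -(rowp_pc h1) E rowp_pc.
have -> : [set c : 'rV[F]_n | GF %| pc c] = psi @: setT.
  apply/setP => c; rewrite inE; apply/idP/imsetP.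
    case/dvdpP => x Ex.
    have sx : (size x <= m)%N.
      have [->|x0] := eqVneq x 0; first by rewrite size_poly0.
      have := size_pc c; rewrite Ex size_mul //; have := size_poly_gt0 x; rewrite x0 /=; rewrite /m; move: sG sG1; move: (size GF) (size x) => g s; rewrite -!subn1; lia.
    exists (rowp m x) => //; apply: (can_inj (@rowp_pc n)).
    by rewrite Epsi pc_rowp // Ex mulrC.
  by case=> h _ ->; rewrite Epsi dvdp_mulIl.
by rewrite card_imset // cardsT card_mx mul1n.
Qed.
End Card.



Section BCHbound.
Variables (F : finFieldType) (L : fieldExtType F) (n : nat) (beta : L).
Hypothesis prim : n.-primitive_root beta.
Local Notation lift_poly := (map_poly (in_alg L)).

Lemma horner_pc (c : 'rV[F]_n) y :
  (lift_poly (pc c)).[y] = \sum_(i < n) in_alg L (c ord0 i) * y ^+ i.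
Proof.
rewrite /pc rmorph_sum horner_sum; apply: eq_bigr => i _ /=.
by rewrite map_polyZ map_polyXn hornerZ hornerXn.
Qed.

Lemma bch_bound (c : 'rV[F]_n) b D : c != 0 ->
  (forall t, (t < D.-1)%N -> root (lift_poly (pc c)) (beta ^+ (b + t))) ->
  (D <= wt c)%N.
Proof.
move=> c0 Hr; rewrite leqNgt; apply/negP => wD.
set I := [set i : 'I_n | c ord0 i != 0].
have wI : wt c = #|I| by [].
have [i0 i0I] : exists i0, i0 \in I.
  apply/existsP; apply: contraR c0 => /existsPn H; apply/eqP/matrixP => i j.
  have -> : i = ord0 by apply/val_inj; case: i => [[]].
  by move: (H j); rewrite inE negbK mxE => /eqP.
set w := #|I|.
pose e := @enum_val _ (mem I).
pose a : 'rV[L]_w := \row_k beta ^+ e k.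
pose x : 'cV[L]_w := \col_k (in_alg L (c ord0 (e k)) * beta ^+ (b * e k)).
have Vx : Vandermonde w a *m x = 0.
  apply/matrixP => t j; rewrite !mxE.
  have tw : (t < wt c)%N := ltn_ord t.
  have tD : (t < D.-1)%N by lia.
  have /eqP := Hr t tD; rewrite horner_pc.
  rewrite (bigID (mem I)) /= [X in _ + X]big1 ?addr0; last first.
    by move=> i; rewrite inE negbK => /eqP ->; rewrite scale0r mul0r.
  rewrite big_enum_val /= => H; apply: (etrans _ H).
  apply: eq_bigr => k _; rewrite !mxE /e -!exprM mulrCA -exprD; congr (_ * _); congr (_ ^+ _); by rewrite mulnDl addnC [(t * _)%N]mulnC.
have Vu : Vandermonde w a \in unitmx.
  rewrite unitmxE det_Vandermonde unitfE; apply/prodf_neq0 => i _; apply/prodf_neq0 => j ij.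
  rewrite !mxE subr_eq0; apply/eqP => /(prim_inj prim) /enum_val_inj E.
  by move: ij; rewrite E ltnn.
have x0 : x = 0 by rewrite -(mulKmx Vu x) Vx mulmx0.
have : x (enum_rank_in i0I i0) 0 = 0 by rewrite x0 mxE.
rewrite mxE /e (enum_rankK_in i0I i0I) => /eqP; rewrite mulf_eq0 expf_eq0 (prim_root_eq0 prim).
rewrite fmorph_eq0; move: i0I; rewrite inE => /negbTE ->.
by rewrite /= gtn_eqF ?(prim_order_gt0 prim) ?andbF.
Qed.
End BCHbound.



Section Main.
Variables (F : finFieldType) (L : fieldExtType F) (beta : L) (u n : nat).
Local Notation q := #|F|.
Local Notation lift_poly := (map_poly (in_alg L)).
Hypotheses (u1 : (1 <= u)%N) (hq : q = u.*2.+1)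
  (hn : n = (4 * u * u * u + 6 * u * u + 3 * u + 1)%N)
  (prim : n.-primitive_root beta).

Let n_gt0 : (0 < n)%N. Proof. by rewrite hn addn1. Qed.

Definition Sset (b e : nat) : {set 'I_n} :=
  [set j : 'I_n | [exists i : 'I_e, (b <= i)%N &&
     [exists k : 'I_6, (j : nat) == ((i * q ^ k) %% n)%N]]].

Lemma Sset_closed b e j : j \in Sset b e -> sigq prim j \in Sset b e.
Proof.
rewrite !inE => /existsP [i /andP [bi /existsP [k /eqP jk]]].
apply/existsP; exists i; rewrite bi /=; apply/existsP.
have E : ((j * q) %% n)%N = ((i * q ^ k.+1) %% n)%N.
  by rewrite /= jk modnMml expnSr mulnA.
case: (ltnP k.+1 6) => k6.
  by exists (Ordinal k6); rewrite E.
exists ord0; rewrite E /= expn0 muln1.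
have k5 : k.+1 = 6%N by have := ltn_ord k; lia.
by rewrite k5 (q6_mul u1 hq hn).
Qed.

Lemma code_char delta b e : e = (b + delta - 1)%N -> forall c : 'rV[F]_n,
  (c \in @bch_code F L n beta delta b) =
  [forall j in Sset b e, root (lift_poly (pc c)) (beta ^+ j)].
Proof.
move=> he c; rewrite inE; apply/idP/forall_inP.
  move=> /bch_genP H j; rewrite inE => /existsP [i /andP [bi /existsP [k /eqP jk]]].
  rewrite jk (prim_expr_mod prim); apply: root_expq; apply: H.
  by rewrite bi -he ltn_ord.
move=> H; apply/bch_genP => i /andP [bi ie]; rewrite -he in ie.
rewrite -(prim_expr_mod prim).
have := H (Ordinal (ltn_pmod i n_gt0)); rewrite /=; apply.
rewrite inE; apply/existsP; exists (Ordinal ie); rewrite bi /=.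
by apply/existsP; exists ord0; rewrite /= expn0 muln1.
Qed.

Lemma card_code delta b e : e = (b + delta - 1)%N ->
  #|@bch_code F L n beta delta b| = (q ^ (n - #|Sset b e|))%N.
Proof.
move=> he.
have /polyOver1P [GF EG] := Gp_over (@Sset_closed b e).
have sG : size GF = (#|Sset b e|).+1 by rewrite -(size_map_poly (in_alg L)) -EG size_Gp.
have G0 : GF != 0 by rewrite -size_poly_gt0 sG.
have -> : @bch_code F L n beta delta b = [set c | GF %| pc c].
  apply/setP => c; rewrite [RHS]inE (code_char he) -(Gp_dvd prim) EG dvdp_map //.
rewrite card_dvd // sG //=.
by rewrite ltnS; apply: leq_trans (max_card _) _; rewrite card_ord.
Qed.


Local Open Scope nat_scope.

Lemma qmod6 x m : ((x * q ^ m) %% n = (x * q ^ (m %% 6)) %% n)%N.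
Proof.
rewrite {1}(divn_eq m 6); move: (m %/ 6) => t.
elim: t x => [|t IH] x; first by rewrite mul0n add0n.
by rewrite mulSn -addnA expnD mulnA IH -modnMml (q6_mul u1 hq hn) modnMml.
Qed.

Definition Tset d : {set 'I_n} := [set i : 'I_n | inT u q i && (i < d)%N].

Lemma h_lt_n : (2 * u * u + 2 * u + 1 < n)%N.
Proof. rewrite hn; nia. Qed.

Lemma card_S1 d : (2 <= d <= 2 * u * u + 2 * u + 1)%N -> #|Sset 1 d| = (6 * #|Tset d|)%N.
Proof.
move=> /andP [d2 dh]; have hn' := h_lt_n.
pose f (p : 'I_6 * 'I_n) : 'I_n := Ordinal (ltn_pmod (p.2 * q ^ p.1) n_gt0).
have -> : Sset 1 d = f @: setX [set: 'I_6] (Tset d).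
  apply/setP => j; apply/idP/imsetP.
    rewrite inE => /existsP [i /andP [i1 /existsP [k /eqP jk]]].
    have ih : (1 <= i <= 2 * u * u + 2 * u)%N by rewrite i1 /=; have := ltn_ord i; lia.
    have [j0 [k0 [Tj0 j0i k06 e0]]] := reach u1 hq hn ih.
    have j0n : (j0 < n)%N by have := ltn_ord i; lia.
    have k6 : ((k0 + k) %% 6 < 6)%N by rewrite ltn_pmod.
    exists (Ordinal k6, Ordinal j0n).
      rewrite !inE /=; apply/andP; split; first exact: Tj0.
      have := ltn_ord i; lia.
    apply/val_inj; rewrite /= jk -e0 modnMml -mulnA -expnD qmod6.
    done.
  case=> [[k i]] /setXP [_]; rewrite inE => /andP [Ti id] ->.
  rewrite inE; apply/existsP; exists (Ordinal id).
  rewrite /=; case/andP: Ti => /andP [-> _] _ /=.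
  by apply/existsP; exists k.
rewrite card_in_imset ?cardsX ?cardsT ?card_ord //.
move=> [k1 i1] [k2 i2]; rewrite !inE /= => /andP [T1 _] /andP [T2 _] /(congr1 val) /= E.
have E2 : ((i1 * q ^ ((k1 + (6 - k2)) %% 6)) %% n = i2)%N.
  rewrite -qmod6 expnD mulnA -modnMml E modnMml -mulnA -expnD.
  have -> : (k2 + (6 - k2) = 6)%N by have := ltn_ord k2; lia.
  by rewrite (q6_mul u1 hq hn) modn_small.
case: (posnP ((k1 + (6 - k2)) %% 6)) => r0.
  have ek : k1 = k2.
    apply: ord_inj; move: r0; have := ltn_ord k1; have := ltn_ord k2; lia.
  subst k2; congr pair; apply: ord_inj; move: E2; rewrite r0 expn0 muln1 modn_small //.
have r6 : (0 < (k1 + (6 - k2)) %% 6 < 6)%N by rewrite r0 ltn_pmod.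
by move: (notT_orbit u1 hq hn T1 r6); rewrite E2 T2.
Qed.


Lemma zero_notin d (j : 'I_n) : d <= n -> j \in Sset 1 d -> 0 < j.
Proof.
move=> dn; rewrite inE => /existsP [i /andP [i1 /existsP [k /eqP jk]]].
rewrite lt0n jk; apply/negP => /eqP H.
have : (i * q ^ (k + (6 - k))) %% n = 0.
  by rewrite expnD mulnA -modnMml H mul0n mod0n.
have -> : k + (6 - k) = 6 by have := ltn_ord k; lia.
rewrite (q6_mul u1 hq hn) modn_small; first lia.
by apply: leq_trans (ltn_ord i) dn.
Qed.

Lemma card_S0 d : 0 < d <= n -> #|Sset 0 d| = (#|Sset 1 d|).+1.
Proof.
move=> /andP [d0 dn].
pose z : 'I_n := Ordinal n_gt0.
have -> : Sset 0 d = z |: Sset 1 d.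
  apply/setP => j; rewrite in_setU1; apply/idP/orP.
    rewrite inE => /existsP [i /andP [_ /existsP [k /eqP jk]]].
    case: (posnP i) => i0.
      by left; apply/eqP; apply: ord_inj; rewrite jk i0 mul0n mod0n.
    right; rewrite inE; apply/existsP; exists i; rewrite i0 /=.
    by apply/existsP; exists k; rewrite jk.
  case=> [/eqP -> | ].
    rewrite inE; apply/existsP; exists (Ordinal d0) => /=.
    by apply/existsP; exists ord0; rewrite mul0n mod0n.
  rewrite !inE => /existsP [i /andP [_ H]]; apply/existsP; exists i.
  by rewrite H.
rewrite cardsU1; have : z \notin Sset 1 d.
  by apply/negP => /(zero_notin dn).
by move/negbTE => ->.
Qed.

Lemma card_T d : 2 <= d <= 2 * u * u + 2 * u + 1 ->
  #|Tset d| = cnt q (minn (d - 1) (2 * u * u + u)).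
Proof.
move=> /andP [d2 dh]; have hn' := h_lt_n.
rewrite -sum1_card big_mkcond /=.
rewrite (eq_bigr (fun i : 'I_n => nat_of_bool ((0 < i <= minn (d - 1) (2 * u * u + u)) && ~~ (q %| i)))); last first.
  move=> i _; rewrite inE /inT.
  case: (q %| i); rewrite ?andbF ?andbT /=.
    by [].
  set bb := (0 < i <= minn (d - 1) (2 * u * u + u)); case: ifP => H; case E: bb => //; exfalso; move: H E; rewrite /bb; lia.
rewrite -(big_mkord xpredT (fun i => nat_of_bool ((0 < i <= minn (d - 1) (2 * u * u + u)) && ~~ (q %| i)))).
have -> : n = (n - 1).+1 by lia.
rewrite sumcnt ?hq //; congr cnt; lia.
Qed.

End Main.


Unset Implicit Arguments.

Theorem theorem5 (F : finFieldType) (L : fieldExtType F) (beta : L) (delta : nat) :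
  let q := #|F| in
  let n := ((q ^ 3 + 1) %/ 2)%N in
  odd q ->
  n.-primitive_root beta ->
  (1 <= delta - 1 <= (q ^ 2 - 1) %/ 2)%N ->
  exists k : nat,
    [/\ k%:Z = kdim q delta,
        #|@bch_code F L n beta delta 1| = (q ^ k)%N,
        min_dist_ge (@bch_code F L n beta delta 1) delta,
        (#|@bch_code F L n beta delta.+1 0| * q)%N = (q ^ k)%N
      & min_dist_ge (@bch_code F L n beta delta.+1 0) (2 * delta)].
Proof.
move=> q n oq prim hd.
set u := q./2.
have hq : q = u.*2.+1 by have := odd_double_half q; rewrite oq /u; lia.
have u1 : (1 <= u)%N.
  have := finNzRing_gt1 F; rewrite -/q hq; lia.
have q3 : (q ^ 3 + 1 = (4 * u * u * u + 6 * u * u + 3 * u + 1) * 2)%N.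
  rewrite hq !expnS expn0; nia.
have hn : n = (4 * u * u * u + 6 * u * u + 3 * u + 1)%N by rewrite /n q3 mulnK.
have q2 : (q ^ 2 - 1 = (2 * u * u + 2 * u) * 2)%N.
  rewrite hq !expnS expn0; nia.
have hh : ((q ^ 2 - 1) %/ 2 = 2 * u * u + 2 * u)%N by rewrite q2 mulnK.
rewrite hh in hd.
have d2 : (2 <= delta <= 2 * u * u + 2 * u + 1)%N by lia.
have hn' := h_lt_n u1 hq hn prim.
have q0 : (0 < q)%N by rewrite hq.
set s := #|Tset F u n delta|.
have cS1 : #|Sset F n 1 delta| = (6 * s)%N by apply: (card_S1 u1 hq hn prim).
have cS0 : #|Sset F n 0 delta| = (6 * s).+1.
  by rewrite (card_S0 u1 hq hn prim) ?cS1 //; lia.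
have sn : (6 * s < n)%N.
  by rewrite -cS0 -[X in (_ <= X)%N](card_ord n) max_card.
have cT : s = cnt q (minn (delta - 1) (2 * u * u + u)) by apply: (card_T u1 hq hn prim).
exists (n - 6 * s)%N; split.
-
  rewrite /kdim -/q -/n hh.
  have e1 : eps q delta = cnt q (delta - 1) by rewrite /eps eps_cnt.
  have e2 : ((q - 3) %/ 2 = u - 1)%N by rewrite hq; lia.
  have e3 : ((q - 2) %/ 2 = u - 1)%N by rewrite hq; lia.
  rewrite e1 e2 e3.
  case: (leqP (delta - 1) (2 * u * u + u)) => dM.
    have -> : (delta <= 2 * u * u + 2 * u - (u - 1))%N by lia.
    have cA : cnt q (delta - 1) = s by rewrite cT; congr cnt; lia.
    rewrite cA; lia.
  have -> : (delta <= 2 * u * u + 2 * u - (u - 1))%N = false by lia.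
  have Mq : (2 * u * u + u = u * q)%N by rewrite hq; lia.
  have c1 : cnt q (2 * u * u + u) = (2 * u * u)%N.
    by rewrite /cnt Mq mulnK //; rewrite hq; lia.
  have c2 : cnt q (delta - 1) = (delta - 1 - u)%N.
    rewrite /cnt (_ : (delta - 1 = u * q + (delta - 1 - u * q))%N); last by lia.
    rewrite divnMDl // divn_small; last by rewrite hq; lia.
    rewrite hq; lia.
  have cB : s = (2 * u * u)%N by rewrite cT -c1; congr cnt; lia.
  rewrite cB c2; lia.
- by rewrite (card_code u1 hq hn prim (e := delta)) ?cS1 //; lia.
- move=> c; rewrite inE => /bch_genP H c0.
  apply: (bch_bound prim (b := 1)) => // t tD; apply: H; lia.
- rewrite (card_code u1 hq hn prim (e := delta)) ?cS0 //; last by lia.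
  by rewrite -expnSr; congr expn; lia.
- move=> c; rewrite inE => /bch_genP H c0.
  apply: (bch_bound prim (b := n - (delta - 1))) => // t tD.
  case: (leqP (delta - 1) t) => td.
    rewrite (_ : (n - (delta - 1) + t = n + (t - (delta - 1)))%N); last by lia.
    rewrite exprD (prim_expr_order prim) mul1r; apply: H; lia.
  set s' := (delta - 1 - t)%N.
  have s'1 : (1 <= s' < n)%N by rewrite /s'; lia.
  have := root_expq 3 (H s' _); rewrite -(prim_expr_mod prim) (mulq3 u1 hq hn s'1).
  rewrite (_ : (n - (delta - 1) + t = n - s')%N); last by rewrite /s'; lia.
  by apply; rewrite /s'; lia.
Qed.
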